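(* Let $\phi:[t_0,\infty)\rightarrow\mathbb{R}^N$ and let $\Omega(t)\in\mathbb{R}^{N\times N}$ solve $$\dot{\Omega}(t)=-\lambda_{\Omega}\Omega(t)+\lambda_{\Omega}\frac{\phi(t)\phi^T(t)}{1+\phi^T(t)\phi(t)},\qquad \Omega(t_0)=\Omega_0,$$ where $\lambda_\Omega>0$ and $\Omega_0$ is symmetric with $0\leq\Omega_0\leq I$. Then for any $\phi$: (1) $\Omega(t)\geq0$ for all $t\geq t_0$; (2) $\Omega(t)\leq I$ for all $t\geq t_0$. Suppose in addition that $\phi$ is bounded and there exist $t_1\geq t_0$ and $t_2>t_1$ such that $\int_{t_1}^{t_2}\phi(\tau)\phi^T(\tau)d\tau\geq\alpha I$ with $\alpha\geq\alpha_0$, where $$\alpha_0=\frac{k_{\Omega}d}{\kappa\Gamma_{max}\rho_{\Omega}\lambda_{\Omega}\exp(-\lambda_{\Omega}(t_2-t_1))},\qquad d=\max_{\tau\in[t_1,t_2]}\{1+\lVert\phi(\tau)\rVert^2\}.$$ Then (3) $\Omega(t)\geq\Omega_{FE}I>(1/(\kappa\Gamma_{max}))I$ for all $t\in[t_2,t_3]$, where $\Omega_{FE}=k_{\Omega}/(\kappa\Gamma_{max})$ and $t_3=t_2-(\ln\rho_{\Omega})/\lambda_{\Omega}$. If in addition $\phi$ is persistently exciting for all $t\geq t_1$, i.e. there are $T>0$ and $\alpha\geq\alpha_0'$ with $\int_t^{t+T}\phi(\tau)\phi^T(\tau)d\tau\geq\alpha I$ for all $t\geq t_1$, where $t_2'=t_1+T$,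 $d'=\max_{\tau\geq t_1}\{1+\lVert\phi(\tau)\rVert^2\}$ and $\alpha_0'=\alpha_0\exp(-\lambda_{\Omega}(t_2-t_2'))d'/d$, then (4) $\Omega(t)\geq\Omega_{FE}I>(1/(\kappa\Gamma_{max}))I$ for all $t\geq t_2'$.
   Context: $\lVert\cdot\rVert$ is the Euclidean 2-norm. For symmetric matrices, $A\leq B$ means $B-A$ is positive semidefinite. The constants are: $\kappa>0$ and $\Gamma_{max}>0$ with $\kappa>\Gamma_{max}^{-1}$, $\rho_{\Omega}\in(0,1)$, and $k_{\Omega}>1$. *)

(* Defs.v *)
From Stdlib Require Import Reals.
From Coquelicot Require Import Coquelicot.
From mathcomp Require Import all_boot all_algebra.
From mathcomp Require Import Rstruct.

Set Implicit Arguments.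
Unset Strict Implicit.
Unset Printing Implicit Defensive.

Local Open Scope ring_scope.

Definition mx_le (N : nat) (A B : 'M[R]_N) : Prop :=
  forall x : 'cV[R]_N, 0 <= (x^T *m (B - A) *m x) 0 0.

Definition mx_lt (N : nat) (A B : 'M[R]_N) : Prop :=
  forall x : 'cV[R]_N, x != 0 -> 0 < (x^T *m (B - A) *m x) 0 0.

Definition sqnorm (N : nat) (v : 'cV[R]_N) : R := (v^T *m v) 0 0.

Definition outer (N : nat) (v : 'cV[R]_N) : 'M[R]_N := v *m v^T.

Definition int_outer (N : nat) (phi : R -> 'cV[R]_N) (a b : R) : 'M[R]_N :=
  \matrix_(i, j) RInt (fun s => outer (phi s) i j) a b.

Definition ex_int_outer (N : nat) (phi : R -> 'cV[R]_N) (a b : R) : Prop :=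
  forall i j : 'I_N, ex_RInt (fun s => outer (phi s) i j) a b.

Definition solves_ode (N : nat) (lam t0 : R) (phi : R -> 'cV[R]_N)
    (Omega : R -> 'M[R]_N) (Omega0 : 'M[R]_N) : Prop :=
  Omega t0 = Omega0 /\
  (forall i j : 'I_N,
     filterlim (fun s => Omega s i j) (at_right t0) (locally (Omega0 i j))) /\
  (forall t : R, (t0 < t)%R -> forall i j : 'I_N,
     is_derive (fun s => Omega s i j) t
       (- lam * Omega t i j
        + lam * (outer (phi t) i j / (1 + sqnorm (phi t))))).

Definition bounded_on_from (N : nat) (t0 : R) (phi : R -> 'cV[R]_N) : Prop :=
  exists B : R, forall t : R, (t0 <= t)%R -> sqnorm (phi t) <= B.

(* Main.v *)
Require Import Defs.
From Stdlib Require Import Reals.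
From Coquelicot Require Import Coquelicot.
From Stdlib Require Import Lra Lia IndefiniteDescription.
Local Open Scope R_scope.

Lemma sorted_head_last (h : R) (l : list R) : sorted Rle (h :: l) -> h <= seq.last h l.
Proof.
  revert h; induction l as [|h2 l IH]; intros h Hs; simpl; [lra|].
  destruct Hs as [H1 H2]. specialize (IH h2 H2). simpl in IH. lra.
Qed.

Section Key.
Variables (G dG p : R -> R) (a b : R).
Hypothesis Hab : a < b.
Hypothesis HG : forall s, a < s <= b -> is_derive G s (dG s).
Hypothesis HGa : filterlim G (at_right a) (locally (G a)).
Hypothesis Hp : forall s, a <= s <= b -> p s <= dG s.

Let Gt s := if Rle_dec s a then G a else G s.

Lemma Gt_eq s : a <= s -> Gt s = G s.
Proof. intros Hs; unfold Gt; destruct (Rle_dec s a); [f_equal; lra|reflexivity]. Qed.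

Lemma Gt_der s : a < s <= b -> is_derive Gt s (dG s).
Proof.
  intros Hs. apply is_derive_ext_loc with G; [|now apply HG].
  assert (Hd : 0 < s - a) by lra.
  exists (mkposreal _ Hd). intros t Ht. simpl in Ht.
  unfold ball in Ht; simpl in Ht; unfold AbsRing_ball, abs, minus, plus, opp in Ht; simpl in Ht.
  symmetry; apply Gt_eq. apply Rabs_lt_between in Ht. lra.
Qed.

Lemma Gt_cont s : a <= s <= b -> continuity_pt Gt s.
Proof.
  intros Hs. apply continuity_pt_filterlim.
  destruct (Req_dec s a) as [->|Hne].
  - rewrite (Gt_eq a (Rle_refl a)).
    intros P HP. specialize (HGa P HP). destruct HGa as [d Hd].
    exists d. intros y Hy. unfold Gt. destruct (Rle_dec y a).
    + now apply locally_singleton.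
    + apply Hd; [exact Hy| lra].
  - change (continuous Gt s). apply (@ex_derive_continuous R_AbsRing R_NormedModule). exists (dG s). apply Gt_der. lra.
Qed.

Definition Ptag x y c := x <= y -> x <= c <= y /\ (a <= x -> y <= b -> (y - x) * p c <= G y - G x).

Lemma Ptag_ex x y : exists c, Ptag x y c.
Proof.
  destruct (Rle_dec x y) as [Hxy|Hxy]; [|exists x; intros H; lra].
  destruct (Rle_dec a x) as [Hax|Hax]; [|exists x; intros _; split; [lra|intros; lra]].
  destruct (Rle_dec y b) as [Hyb|Hyb]; [|exists x; intros _; split; [lra|intros; lra]].
  destruct (Req_dec x y) as [<-|Hne].
  { exists x. intros _. split; [lra|]. intros _ _. replace (x - x) with 0 by ring. lra. }
  destruct (MVT_gen Gt x y dG) as [c [Hc Heq]].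
  - intros t Ht. rewrite Rmin_left in Ht by lra. rewrite Rmax_right in Ht by lra.
    apply Gt_der. lra.
  - intros t Ht. rewrite Rmin_left in Ht by lra. rewrite Rmax_right in Ht by lra.
    apply Gt_cont. lra.
  - rewrite Rmin_left in Hc by lra. rewrite Rmax_right in Hc by lra.
    exists c. intros _. split; [lra|]. intros _ _.
    rewrite <- (Gt_eq y) by lra. rewrite <- (Gt_eq x) by lra. rewrite Heq.
    assert (p c <= dG c) by (apply Hp; lra).
    assert (0 <= y - x) by lra. nra.
Qed.

Definition xi x y := proj1_sig (constructive_indefinite_description _ (Ptag_ex x y)).

Lemma xi_spec x y : Ptag x y (xi x y).
Proof. exact (proj2_sig (constructive_indefinite_description _ (Ptag_ex x y))). Qed.

Lemma tele (l : list R) : forall h z, a <= h -> sorted Rle (h :: l) -> seq.last h l <= b ->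
  seq.foldr plus zero (seq.pairmap (fun x y : R * R => scal (fst y - fst x) (p (snd y)))
     (h, z) (seq.pairmap (fun x y : R => (y, xi x y)) h l)) <= G (seq.last h l) - G h.
Proof.
  induction l as [|h2 l IH]; intros h z Hh Hs Hl; simpl.
  - replace (G h - G h) with 0 by ring. apply Rle_refl.
  - destruct Hs as [H1 H2].
    specialize (IH h2 (xi h h2) ltac:(lra) H2 Hl).
    pose proof (sorted_head_last h2 l H2).
    destruct (xi_spec h h2 H1) as [_ Ht]. specialize (Ht Hh ltac:(simpl in Hl; lra)).
    simpl in IH. match goal with |- plus (scal ?u ?v) ?S <= ?r => change (u * v + S <= r) end. lra.
Qed.

Lemma key (I : R) : is_RInt p a b I -> I <= G b - G a.
Proof.
  intros HI.
  apply Rnot_lt_le. intros Hlt.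
  assert (He : 0 < I - (G b - G a)) by lra.
  specialize (HI (ball I (mkposreal _ He)) (locally_ball _ _)).
  destruct HI as [d Hd].
  destruct (seq_step_unif_part_ex a b d) as [n Hn].
  set (ptd := SF_seq_f2 xi (unif_part a b n)).
  assert (Hxi : forall x y, x <= y -> x <= xi x y <= y).
  { intros x y Hxy. now destruct (xi_spec x y Hxy). }
  destruct (Riemann_fine_unif_part xi a b n Hxi (Rlt_le _ _ Hab)) as [_ [Hpt [Hh Hl]]].
  specialize (Hd ptd).
  assert (Hlx : SF_lx ptd = unif_part a b n).
  { apply SF_lx_f2. unfold unif_part, seq.mkseq. simpl. lia. }
  rewrite Hlx in Hd. specialize (Hd Hn).
  try rewrite Rmin_left in Hd by lra; try rewrite Rmax_right in Hd by lra.
  fold ptd in Hpt, Hh, Hl. rewrite Hlx in Hl. specialize (Hd (conj Hpt (conj Hh Hl))).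
  rewrite sign_eq_1 in Hd by lra. change (scal 1 (Riemann_sum p ptd)) with (1 * Riemann_sum p ptd) in Hd. rewrite Rmult_1_l in Hd.
  assert (HRS : Riemann_sum p ptd <= G b - G a).
  { pose proof (head_unif_part 0 a b n) as H0.
    pose proof (last_unif_part 0 a b n) as H1.
    pose proof (unif_part_sort a b n ltac:(lra)) as H2.
    destruct (unif_part a b n) as [|h l] eqn:E; [unfold unif_part, seq.mkseq in E; simpl in E; discriminate|].
    simpl in H0, H1. subst h. rewrite <- H1.
    unfold ptd, Riemann_sum, SF_seq_f2. simpl. apply tele; auto; lra. }
  unfold ball in Hd; simpl in Hd; unfold AbsRing_ball, abs, minus, plus, opp in Hd; simpl in Hd.
  apply Rabs_lt_between in Hd. lra.
Qed.
End Key.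

Lemma cont_right (g : R -> R) a : continuous g a -> filterlim g (at_right a) (locally (g a)).
Proof.
  intros H. eapply filterlim_filter_le_1; [|exact H].
  apply filter_le_within.
Qed.

Lemma exp_lin_derive lam s : is_derive (fun s => exp (lam*s)) s (lam * exp (lam*s)).
Proof.
  pose proof (is_derive_scal (fun t => t) s lam _ (@is_derive_id R_AbsRing s)) as H1.
  pose proof (@is_derive_comp R_AbsRing R_NormedModule exp (fun t => lam * t) s _ _ (is_derive_exp _) H1) as H2.
  replace (lam * exp (lam * s)) with (scal (lam * one) (exp (lam * s))); [exact H2|].
  change (scal ?u ?v) with (u * v). change (lam * 1 * exp (lam * s) = lam * exp (lam*s)). ring.
Qed.

Lemma scal_ode (f Q p : R -> R) (lam t0 a b I : R) :
 (forall t, t0 < t -> is_derive f t (-lam * f t + lam * Q t)) ->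
 filterlim f (at_right t0) (locally (f t0)) ->
 t0 <= a -> a < b ->
 (forall s, a <= s <= b -> p s <= lam * exp (lam*s) * Q s) ->
 is_RInt p a b I ->
 I <= exp (lam*b) * f b - exp (lam*a) * f a.
Proof.
  intros Hd Hl Ha Hab Hp HI.
  apply (key (fun s => exp (lam*s) * f s) (fun s => lam * exp (lam*s) * Q s) p a b); auto.
  - intros s Hs.
    assert (He : is_derive (fun s => exp (lam*s)) s (lam * exp (lam*s))).
    { apply exp_lin_derive. }
    pose proof (is_derive_mult _ _ s _ _ He (Hd s ltac:(lra)) Rmult_comm) as H.
    replace (lam * exp (lam * s) * Q s) with
      (plus (mult (lam * exp (lam * s)) (f s)) (mult (exp (lam*s)) (- lam * f s + lam * Q s))).
    exact H.
    change (lam * exp (lam*s) * f s + exp (lam*s) * (-lam * f s + lam * Q s) = lam * exp (lam * s) * Q s). ring.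
  - assert (Hfa : filterlim f (at_right a) (locally (f a))).
    { destruct (Req_dec a t0) as [->|Hne]; auto.
      apply cont_right, (@ex_derive_continuous R_AbsRing R_NormedModule).
      eexists; apply Hd; lra. }
    assert (Hea : filterlim (fun s => exp (lam*s)) (at_right a) (locally (exp (lam*a)))).
    { apply (cont_right (fun s => exp (lam * s))), (@ex_derive_continuous R_AbsRing R_NormedModule).
      eexists; apply exp_lin_derive. }
    apply (filterlim_comp_2 _ _ (fun u v => mult u v) Hea Hfa).
    apply (@filterlim_mult R_AbsRing).
Qed.

Lemma exp_mono_le x y : x <= y -> exp x <= exp y.
Proof. intros H; destruct (Rle_lt_or_eq_dec _ _ H) as [H1|H1]; [left; now apply exp_increasing|rewrite H1; lra]. Qed.

Lemma mono (f Q : R -> R) (lam t0 a b : R) :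
 (forall t, t0 < t -> is_derive f t (-lam * f t + lam * Q t)) ->
 filterlim f (at_right t0) (locally (f t0)) ->
 0 <= lam -> (forall s, t0 <= s -> 0 <= Q s) ->
 t0 <= a -> a <= b -> exp (lam*a) * f a <= exp (lam*b) * f b.
Proof.
  intros Hd Hl Hlam HQ Ha Hab.
  destruct (Rle_lt_or_eq_dec _ _ Hab) as [Hlt|Heq]; [|rewrite Heq; lra].
  assert (H0 : is_RInt (fun _ => 0) a b 0).
  { pose proof (@is_RInt_const R_NormedModule a b 0) as H.
    change (scal (b - a) 0) with ((b - a) * 0) in H. rewrite Rmult_0_r in H. exact H. }
  pose proof (scal_ode f Q (fun _ => 0) lam t0 a b 0 Hd Hl Ha Hlt) as H.
  assert (H1 : 0 <= exp (lam * b) * f b - exp (lam * a) * f a).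
  { apply H; auto. intros s Hs. pose proof (exp_pos (lam * s)).
    pose proof (HQ s ltac:(lra)). apply Rmult_le_pos; [apply Rmult_le_pos|]; lra. }
  lra.
Qed.

Lemma ode_flip (f Q : R -> R) (lam t0 c : R) :
 (forall t, t0 < t -> is_derive f t (-lam * f t + lam * Q t)) ->
 filterlim f (at_right t0) (locally (f t0)) ->
 (forall t, t0 < t -> is_derive (fun s => c - f s) t (-lam * (c - f t) + lam * (c - Q t))) /\
 filterlim (fun s => c - f s) (at_right t0) (locally (c - f t0)).
Proof.
  intros Hd Hl. split.
  - intros t Ht.
    pose proof (@is_derive_minus R_AbsRing R_NormedModule (fun _ => c) f t _ _
                  (@is_derive_const R_AbsRing R_NormedModule c t) (Hd t Ht)) as H.
    replace (-lam * (c - f t) + lam * (c - Q t)) with (minus zero (-lam * f t + lam * Q t)).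
    exact H.
    change (0 - (-lam * f t + lam * Q t) = -lam * (c - f t) + lam * (c - Q t)). ring.
  - assert (Ho : filterlim (fun s => opp (f s)) (at_right t0) (locally (opp (f t0)))).
    { apply (filterlim_comp _ _ _ f opp _ _ _ Hl). apply (@filterlim_opp R_AbsRing R_NormedModule). }
    apply (filterlim_comp_2 (fun _ => c) (fun s => opp (f s)) (fun u v => plus u v)
             (filterlim_const c) Ho).
    apply (@filterlim_plus R_AbsRing R_NormedModule).
Qed.

Lemma final3 (lam t1 t2 t rho kO kap Gm al d X F : R) :
  0 < lam -> 0 < rho < 1 -> 0 < kap -> 0 < Gm -> 0 < kO -> 0 < d -> 0 <= X ->
  t2 <= t <= t2 - ln rho / lam ->
  al >= kO * d / (kap * Gm * rho * lam * exp (- lam * (t2 - t1))) ->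
  lam * exp (lam * t1) / d * (al * X) <= exp (lam * t) * F ->
  kO / (kap * Gm) * X <= F.
Proof.
  intros Hl Hr Hk Hg HkO Hd HX Ht Hal HF.
  set (E1 := exp (- lam * (t2 - t1))).
  assert (HE1 : 0 < E1) by apply exp_pos.
  assert (HK : 0 < kap * Gm) by nra.
  assert (HC : 0 < kap * Gm * rho * lam * E1).
  { apply Rmult_lt_0_compat; [|exact HE1]. apply Rmult_lt_0_compat; [|exact Hl]. nra. }
  assert (Hal2 : kO * d <= al * (kap * Gm * rho * lam * E1)).
  { apply Rge_le in Hal. apply (Rmult_le_compat_r (kap * Gm * rho * lam * E1)) in Hal; [|lra].
    assert (Hq : kO * d / (kap * Gm * rho * lam * E1) * (kap * Gm * rho * lam * E1) = kO * d) by (field; lra).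
    change (exp (- lam * (t2 - t1))) with E1 in Hal. lra. }
  assert (Hrho : rho <= exp (- lam * (t - t2))).
  { rewrite <- (exp_ln rho) by lra. apply exp_mono_le.
    assert (ln rho / lam * lam = ln rho) by (field; lra).
    assert (t - t2 <= - (ln rho / lam)) by lra.
    apply (Rmult_le_compat_l lam) in H0; lra. }
  assert (Hsplit : exp (lam * t1) = exp (lam * t) * (E1 * exp (- lam * (t - t2)))).
  { unfold E1. rewrite <- !exp_plus. f_equal. ring. }
  rewrite Hsplit in HF.
  assert (Het : 0 < exp (lam * t)) by apply exp_pos.
  assert (HF2 : lam * (E1 * exp (- lam * (t - t2))) / d * (al * X) <= F).
  { apply (Rmult_le_reg_l (exp (lam * t))); [exact Het|].
    replace (exp (lam * t) * (lam * (E1 * exp (- lam * (t - t2))) / d * (al * X)))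
      with (lam * (exp (lam * t) * (E1 * exp (- lam * (t - t2)))) / d * (al * X)) by (field; lra).
    exact HF. }
  assert (Hal0 : 0 < al).
  { destruct (Rle_or_lt al 0) as [Hn|Hp]; [|exact Hp].
    assert (al * (kap * Gm * rho * lam * E1) <= 0).
    { apply Rmult_le_0_r; lra. }
    assert (0 < kO * d) by (apply Rmult_lt_0_compat; lra). lra. }
  assert (S1 : kO / (kap * Gm) <= al * rho * lam * E1 / d).
  { apply (Rmult_le_reg_r (kap * Gm * d)). nra.
    replace (kO / (kap * Gm) * (kap * Gm * d)) with (kO * d) by (field; lra).
    replace (al * rho * lam * E1 / d * (kap * Gm * d)) with (al * (kap * Gm * rho * lam * E1)) by (field; lra).
    exact Hal2. }
  assert (S2 : (al * lam * E1 * X / d) * rho <= (al * lam * E1 * X / d) * exp (- lam * (t - t2))).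
  { apply Rmult_le_compat_l; [|exact Hrho].
    unfold Rdiv. apply Rmult_le_pos; [|left; apply Rinv_0_lt_compat; lra].
    apply Rmult_le_pos; [|exact HX]. apply Rmult_le_pos; [|lra]. nra. }
  assert (S3 : kO / (kap * Gm) * X <= al * rho * lam * E1 / d * X).
  { apply Rmult_le_compat_r; [exact HX|exact S1]. }
  replace (al * rho * lam * E1 / d * X) with ((al * lam * E1 * X / d) * rho) in S3 by (field; lra).
  replace ((al * lam * E1 * X / d) * exp (- lam * (t - t2))) with
     (lam * (E1 * exp (- lam * (t - t2))) / d * (al * X)) in S2 by (field; lra).
  lra.
Qed.

Lemma final4 (lam t1 t2 T t rho kO kap Gm al d d' X F : R) :
  0 < lam -> 0 < rho < 1 -> 0 < kap -> 0 < Gm -> 0 < kO -> 0 < d -> 0 < d' -> 0 <= X ->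
  al >= kO * d / (kap * Gm * rho * lam * exp (- lam * (t2 - t1))) * exp (- lam * (t2 - (t1 + T))) * d' / d ->
  lam * exp (lam * (t - T)) / d' * (al * X) <= exp (lam * t) * F ->
  kO / (kap * Gm) * X <= F.
Proof.
  intros Hl Hr Hk Hg HkO Hd Hd' HX Hal HF.
  pose proof (exp_pos (- lam * (t2 - t1))) as HE1.
  pose proof (exp_pos (lam * T)) as HET.
  pose proof (exp_pos (- (lam * T))) as HEmT.
  pose proof (exp_pos (lam * t)) as Het.
  assert (HE : exp (- lam * (t2 - (t1 + T))) = exp (- lam * (t2 - t1)) * exp (lam * T)).
  { rewrite <- exp_plus. f_equal. ring. }
  assert (HTT : exp (lam * T) * exp (- (lam * T)) = 1).
  { rewrite <- exp_plus. replace (lam * T + - (lam * T)) with 0 by ring. apply exp_0. }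
  rewrite HE in Hal.
  assert (HB : kO * d / (kap * Gm * rho * lam * exp (- lam * (t2 - t1))) *
     (exp (- lam * (t2 - t1)) * exp (lam * T)) * d' / d = kO * d' * exp (lam * T) / (kap * Gm * rho * lam)).
  { field. repeat split; try lra. }
  rewrite HB in Hal. apply Rge_le in Hal.
  assert (Heq : exp (lam * (t - T)) = exp (lam * t) * exp (- (lam * T))).
  { rewrite <- exp_plus. f_equal. ring. }
  rewrite Heq in HF.
  assert (HF2 : lam * exp (- (lam * T)) / d' * (al * X) <= F).
  { apply (Rmult_le_reg_l (exp (lam * t))); [exact Het|].
    replace (exp (lam * t) * (lam * exp (- (lam * T)) / d' * (al * X)))
      with (lam * (exp (lam * t) * exp (- (lam * T))) / d' * (al * X)) by (field; lra).
    exact HF. }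
  assert (S1 : lam * exp (- (lam * T)) / d' * (kO * d' * exp (lam * T) / (kap * Gm * rho * lam) * X)
             <= lam * exp (- (lam * T)) / d' * (al * X)).
  { apply Rmult_le_compat_l.
    - unfold Rdiv. apply Rmult_le_pos; [|left; apply Rinv_0_lt_compat; lra]. nra.
    - apply Rmult_le_compat_r; lra. }
  assert (S2 : lam * exp (- (lam * T)) / d' * (kO * d' * exp (lam * T) / (kap * Gm * rho * lam) * X)
             = kO / (kap * Gm * rho) * X).
  { replace (lam * exp (- (lam * T)) / d' * (kO * d' * exp (lam * T) / (kap * Gm * rho * lam) * X))
      with ((exp (lam * T) * exp (- (lam * T))) * (kO / (kap * Gm * rho) * X)) by (field; repeat split; lra).
    rewrite HTT. ring. }
  assert (S3 : kO / (kap * Gm) * X <= kO / (kap * Gm * rho) * X).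
  { apply Rmult_le_compat_r; [exact HX|].
    unfold Rdiv. apply Rmult_le_compat_l; [lra|].
    assert (0 < kap * Gm) by nra.
    apply Rinv_le_contravar; [apply Rmult_lt_0_compat; lra|].
    nra. }
  lra.
Qed.

Lemma pbound (lam t1 s d D q2 : R) :
  0 < lam -> 0 < D -> D <= d -> 0 <= q2 -> t1 <= s ->
  lam * exp (lam * t1) / d * q2 <= lam * exp (lam * s) * (q2 / D).
Proof.
  intros Hl HD HDd Hq Hs.
  assert (He : exp (lam * t1) <= exp (lam * s)) by (apply exp_mono_le; nra).
  pose proof (exp_pos (lam * t1)).
  assert (Hinv : / d <= / D) by (apply Rinv_le_contravar; lra).
  unfold Rdiv.
  replace (lam * exp (lam * t1) * / d * q2) with (lam * (exp (lam * t1) * (q2 * / d))) by ring.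
  replace (lam * exp (lam * s) * (q2 * / D)) with (lam * (exp (lam * s) * (q2 * / D))) by ring.
  apply Rmult_le_compat_l; [lra|].
  apply Rmult_le_compat; [lra| |exact He|].
  - apply Rmult_le_pos; [exact Hq|left; apply Rinv_0_lt_compat; lra].
  - apply Rmult_le_compat_l; [exact Hq|exact Hinv].
Qed.


Lemma mono_nonneg (f Q : R -> R) (lam t0 t : R) :
 (forall t, t0 < t -> is_derive f t (-lam * f t + lam * Q t)) ->
 filterlim f (at_right t0) (locally (f t0)) ->
 0 <= lam -> (forall s, t0 <= s -> 0 <= Q s) ->
 0 <= f t0 -> t0 <= t -> 0 <= f t.
Proof.
  intros Hd Hl Hlam HQ H0 Ht.
  pose proof (mono f Q lam t0 t0 t Hd Hl Hlam HQ (Rle_refl _) Ht) as H.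
  pose proof (exp_pos (lam * t0)). pose proof (exp_pos (lam * t)).
  assert (0 <= exp (lam * t0) * f t0) by (apply Rmult_le_pos; lra).
  destruct (Rle_or_lt 0 (f t)) as [Hp|Hn]; [exact Hp|].
  assert (exp (lam * t) * f t < 0) by (apply Rmult_pos_neg; lra). lra.
Qed.

Lemma window (f Q q2 : R -> R) (lam t0 a b t d V A : R) :
 (forall t, t0 < t -> is_derive f t (-lam * f t + lam * Q t)) ->
 filterlim f (at_right t0) (locally (f t0)) ->
 0 < lam -> (forall s, t0 <= s -> 0 <= Q s) ->
 t0 <= a -> a < b -> b <= t -> 0 < d ->
 (forall s, a <= s <= b -> lam * exp (lam * a) / d * q2 s <= lam * exp (lam * s) * Q s) ->
 is_RInt q2 a b V -> A <= V -> 0 <= f a ->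
 lam * exp (lam * a) / d * A <= exp (lam * t) * f t.
Proof.
  intros Hd Hl Hlam HQ Ha Hab Hbt Hd0 Hp HV HA Hfa.
  set (c := lam * exp (lam * a) / d).
  assert (Hc : 0 <= c).
  { unfold c, Rdiv. pose proof (exp_pos (lam * a)).
    apply Rmult_le_pos; [apply Rmult_le_pos; lra|left; apply Rinv_0_lt_compat; lra]. }
  assert (HcV : is_RInt (fun s => c * q2 s) a b (c * V)).
  { exact (@is_RInt_scal R_NormedModule q2 a b c V HV). }
  pose proof (scal_ode f Q (fun s => c * q2 s) lam t0 a b (c * V) Hd Hl Ha Hab Hp HcV) as H1.
  pose proof (mono f Q lam t0 b t Hd Hl (Rlt_le _ _ Hlam) HQ ltac:(lra) Hbt) as H2.
  pose proof (exp_pos (lam * a)).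
  assert (0 <= exp (lam * a) * f a) by (apply Rmult_le_pos; lra).
  assert (c * A <= c * V) by (apply Rmult_le_compat_l; lra).
  lra.
Qed.

From mathcomp Require Import all_boot all_order all_algebra.
From mathcomp Require Import Rstruct.
From mathcomp Require Import ring lra.
Set Implicit Arguments. Unset Strict Implicit. Unset Printing Implicit Defensive.
Import Order.TTheory GRing.Theory Num.Theory.
Local Open Scope ring_scope.

Definition quad (N : nat) (x : 'cV[R]_N) (M : 'M[R]_N) : R := (x^T *m M *m x) 0 0.
Definition dotv (N : nat) (x v : 'cV[R]_N) : R := \sum_i x i 0 * v i 0.

Lemma quadE N (x : 'cV[R]_N) M :
  quad x M = \sum_j \sum_i (x i 0 * x j 0) * M i j.
Proof.
rewrite /quad !mxE; apply: eq_bigr => j _; rewrite !mxE mulr_suml.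
by apply: eq_bigr => i _; rewrite !mxE; ring.
Qed.

Lemma quadB N (x : 'cV[R]_N) A B : quad x (A - B) = quad x A - quad x B.
Proof. by rewrite /quad mulmxBr mulmxBl !mxE. Qed.

Lemma quad_scalar N (x : 'cV[R]_N) c : quad x (c%:M) = c * sqnorm x.
Proof. by rewrite /quad /sqnorm mul_mx_scalar -scalemxAl !mxE. Qed.

Lemma sqnormE N (v : 'cV[R]_N) : sqnorm v = \sum_i v i 0 ^+ 2.
Proof. by rewrite /sqnorm mxE; apply: eq_bigr => i _; rewrite mxE expr2. Qed.

Lemma sqnorm_ge0 N (v : 'cV[R]_N) : 0 <= sqnorm v.
Proof. by rewrite sqnormE; apply: sumr_ge0 => i _; apply: sqr_ge0. Qed.

Lemma quad_outer N (x v : 'cV[R]_N) : quad x (outer v) = dotv x v ^+ 2.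
Proof.
rewrite /quad /outer /dotv !mulmxA -(mulmxA (x^T *m v)) mxE big_ord1 expr2; congr (_ * _).
  by rewrite mxE; apply: eq_bigr => i _; rewrite mxE.
by rewrite mxE; apply: eq_bigr => i _; rewrite !mxE mulrC.
Qed.
Lemma outerE N (v : 'cV[R]_N) i j : outer v i j = v i 0 * v j 0.
Proof. by rewrite /outer mxE big_ord1 mxE. Qed.

Lemma cauchy_schwarz N (x v : 'cV[R]_N) : dotv x v ^+ 2 <= sqnorm x * sqnorm v.
Proof.
have H : 0 <= \sum_i \sum_j (x i 0 * v j 0 - x j 0 * v i 0) ^+ 2.
  by apply: sumr_ge0 => i _; apply: sumr_ge0 => j _; apply: sqr_ge0.
set X := sqnorm x; set V := sqnorm v; set S := dotv x v.
have E1 : \sum_i \sum_j (x i 0 * v j 0 - x j 0 * v i 0) ^+ 2 =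
   \sum_i \sum_j (x i 0 ^+ 2 * v j 0 ^+ 2) + \sum_i \sum_j (x j 0 ^+ 2 * v i 0 ^+ 2)
   - 2 * \sum_i \sum_j (x i 0 * v i 0 * (x j 0 * v j 0)).
  rewrite mulr_sumr -big_split -sumrB; apply: eq_bigr => i _.
  rewrite mulr_sumr -big_split -sumrB; apply: eq_bigr => j _ /=; ring.
have E2 : \sum_i \sum_j (x j 0 ^+ 2 * v i 0 ^+ 2) = \sum_i \sum_j (x i 0 ^+ 2 * v j 0 ^+ 2).
  by rewrite exchange_big.
have E3 : \sum_i \sum_j (x i 0 ^+ 2 * v j 0 ^+ 2) = X * V.
  rewrite /X /V !sqnormE mulr_suml; apply: eq_bigr => i _; by rewrite mulr_sumr.
have E4 : \sum_i \sum_j (x i 0 * v i 0 * (x j 0 * v j 0)) = S ^+ 2.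
  rewrite /S /dotv expr2 mulr_suml; apply: eq_bigr => i _; by rewrite mulr_sumr.
rewrite E1 E2 E3 E4 in H.
lra.
Qed.

Lemma is_derive_sum (I : Type) (r : seq I) (F : I -> R -> R) (dF : I -> R) t :
  (forall i, is_derive (F i) t (dF i)) ->
  is_derive (fun s => \sum_(i <- r) F i s) t (\sum_(i <- r) dF i).
Proof.
move=> H; elim: r => [|i r IH].
  apply: (@is_derive_ext R_AbsRing R_NormedModule (fun _ => 0)) => [s|]; first by rewrite big_nil.
  rewrite big_nil; exact: (@is_derive_const R_AbsRing R_NormedModule).
apply: (@is_derive_ext R_AbsRing R_NormedModule (fun s => F i s + \sum_(j <- r) F j s)) => [s|]; first by rewrite big_cons.
rewrite big_cons; exact: (@is_derive_plus R_AbsRing R_NormedModule _ _ _ _ _ (H i) IH).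
Qed.

Lemma is_derive_mulc (F : R -> R) c d t :
  is_derive F t d -> is_derive (fun s => c * F s) t (c * d).
Proof. exact: is_derive_scal. Qed.

Lemma is_RInt_sum (I : Type) (r : seq I) (F : I -> R -> R) (l : I -> R) a b :
  (forall i, is_RInt (F i) a b (l i)) ->
  is_RInt (fun s => \sum_(i <- r) F i s) a b (\sum_(i <- r) l i).
Proof.
move=> H; elim: r => [|i r IH].
  apply: (@is_RInt_ext R_NormedModule (fun _ => 0)) => [s _|]; first by rewrite big_nil.
  rewrite big_nil; have H0 := @is_RInt_const R_NormedModule a b 0.
  by rewrite scal_zero_r in H0.
apply: (@is_RInt_ext R_NormedModule (fun s => F i s + \sum_(j <- r) F j s)) => [s _|]; first by rewrite big_cons.
rewrite big_cons; exact: (@is_RInt_plus R_NormedModule _ _ _ _ _ _ (H i) IH).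
Qed.

Lemma is_RInt_mulc (F : R -> R) c l a b :
  is_RInt F a b l -> is_RInt (fun s => c * F s) a b (c * l).
Proof. move=> H; exact: (@is_RInt_scal R_NormedModule _ _ _ c _ H). Qed.

Lemma lim_sum (I : Type) (r : seq I) (F : I -> R -> R) (l : I -> R) a :
  (forall i, filterlim (F i) (at_right a) (locally (l i))) ->
  filterlim (fun s => \sum_(i <- r) F i s) (at_right a) (locally (\sum_(i <- r) l i)).
Proof.
move=> H; elim: r => [|i r IH].
  apply: (filterlim_ext (fun _ => 0)) => [s|]; first by rewrite big_nil.
  rewrite big_nil; exact: filterlim_const.
apply: (filterlim_ext (fun s => F i s + \sum_(j <- r) F j s)) => [s|]; first by rewrite big_cons.
rewrite big_cons.
apply: (filterlim_comp_2 (F i) (fun s => \sum_(j <- r) F j s) (fun u v => plus u v) (H i) IH).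
exact: (@filterlim_plus R_AbsRing R_NormedModule).
Qed.

Lemma lim_mulc (F : R -> R) c l a :
  filterlim F (at_right a) (locally l) ->
  filterlim (fun s => c * F s) (at_right a) (locally (c * l)).
Proof.
move=> H.
apply: (filterlim_comp_2 (fun _ => c) F (fun u v => mult u v) (filterlim_const c) H).
exact: (@filterlim_mult R_AbsRing).
Qed.

Lemma lin2 N (c A B : 'I_N -> 'I_N -> R) (al be : R) :
  \sum_j \sum_i c i j * (al * A i j + be * B i j) =
  al * (\sum_j \sum_i c i j * A i j) + be * (\sum_j \sum_i c i j * B i j).
Proof.
rewrite !mulr_sumr -big_split; apply: eq_bigr => j _ /=.
rewrite !mulr_sumr -big_split; apply: eq_bigr => i _ /=; ring.
Qed.

Lemma quad_derive N lam t0 (phi : R -> 'cV[R]_N) Omega Omega0 (x : 'cV[R]_N) t :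
  solves_ode lam t0 phi Omega Omega0 -> t0 < t ->
  is_derive (fun s => quad x (Omega s)) t
    (- lam * quad x (Omega t) + lam * (dotv x (phi t) ^+ 2 / (1 + sqnorm (phi t)))).
Proof.
move=> [_ [_ Hd]] Ht.
apply: (@is_derive_ext R_AbsRing R_NormedModule
   (fun s => \sum_j \sum_i (x i 0 * x j 0) * Omega s i j)) => [s|]; first by rewrite quadE.
suff -> : - lam * quad x (Omega t) + lam * (dotv x (phi t) ^+ 2 / (1 + sqnorm (phi t))) =
  \sum_j \sum_i (x i 0 * x j 0) * (- lam * Omega t i j + lam * (outer (phi t) i j / (1 + sqnorm (phi t)))).
  apply: is_derive_sum => j; apply: is_derive_sum => i; apply: is_derive_mulc; exact: Hd.
rewrite (lin2 (fun i j => x i 0 * x j 0) (fun i j => Omega t i j)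
   (fun i j => outer (phi t) i j / (1 + sqnorm (phi t)))).
rewrite quadE -quad_outer quadE mulr_suml; congr (_ + _ * _).
apply: eq_bigr => j _; rewrite mulr_suml; apply: eq_bigr => i _; by rewrite mulrA.
Qed.

Lemma quad_lim N lam t0 (phi : R -> 'cV[R]_N) Omega Omega0 (x : 'cV[R]_N) :
  solves_ode lam t0 phi Omega Omega0 ->
  filterlim (fun s => quad x (Omega s)) (at_right t0) (locally (quad x Omega0)).
Proof.
move=> [_ [Hl _]].
apply: (filterlim_ext (fun s => \sum_j \sum_i (x i 0 * x j 0) * Omega s i j)) => [s|];
  first by rewrite quadE.
rewrite quadE.
apply: lim_sum => j; apply: lim_sum => i; apply: lim_mulc; exact: Hl.
Qed.

Lemma quad_int N (phi : R -> 'cV[R]_N) (x : 'cV[R]_N) a b :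
  ex_int_outer phi a b ->
  is_RInt (fun s => dotv x (phi s) ^+ 2) a b (quad x (int_outer phi a b)).
Proof.
move=> He.
apply: (@is_RInt_ext R_NormedModule (fun s => \sum_j \sum_i (x i 0 * x j 0) * outer (phi s) i j))
  => [s _|]; first by rewrite -quad_outer quadE.
rewrite quadE.
apply: is_RInt_sum => j; apply: is_RInt_sum => i.
rewrite /int_outer mxE; apply: is_RInt_mulc; exact: RInt_correct.
Qed.

Lemma mx_le_quad N (A B : 'M[R]_N) : mx_le A B <-> forall x, quad x A <= quad x B.
Proof.
split=> H x; have := H x; rewrite -/(quad x (B - A)) quadB; lra.
Qed.

Lemma quad0 N (x : 'cV[R]_N) : quad x 0 = 0.
Proof. by rewrite /quad mulmx0 mul0mx mxE. Qed.

Lemma sqnorm_gt0 N (x : 'cV[R]_N) : x != 0 -> 0 < sqnorm x.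
Proof.
move=> Hx; rewrite lt_neqAle sqnorm_ge0 andbT eq_sym; apply: contra Hx => /eqP H0.
rewrite sqnormE in H0.
have Hi := (psumr_eq0P (fun i _ => sqr_ge0 (x i 0)) H0).
apply/eqP/matrixP => i j; rewrite (ord1 j) !mxE.
by have /eqP := Hi i isT; rewrite sqrf_eq0 => /eqP.
Qed.

Lemma mxlt_part N (K kO : R) : 0 < K -> 1 < kO ->
  @mx_lt N (K^-1%:M) ((kO / K)%:M).
Proof.
move=> HK HkO x Hx.
rewrite -/(quad x _) quadB !quad_scalar -mulrBl.
apply: mulr_gt0; last exact: sqnorm_gt0.
have -> : kO / K - K^-1 = (kO - 1) / K by rewrite mulrBl mul1r.
by apply: divr_gt0; [rewrite subr_gt0|].
Qed.

Theorem lemma6 (N : nat) (kappa Gmax rhoO kO lamO t0 : R)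
  (phi : R -> 'cV[R]_N) (Omega : R -> 'M[R]_N) (Omega0 : 'M[R]_N) :
  0 < kappa -> 0 < Gmax -> kappa > Gmax^-1 ->
  0 < rhoO < 1 -> 1 < kO ->
  0 < lamO ->
  Omega0^T = Omega0 -> mx_le 0 Omega0 -> mx_le Omega0 1%:M ->
  solves_ode lamO t0 phi Omega Omega0 ->
  (* (1) *)
  (forall t, t0 <= t -> mx_le 0 (Omega t)) /\
  (* (2) *)
  (forall t, t0 <= t -> mx_le (Omega t) 1%:M) /\
  (* (3) *)
  (bounded_on_from t0 phi ->
   forall (t1 t2 alpha d : R),
     t0 <= t1 -> t1 < t2 ->
     is_lub (fun y => exists tau, t1 <= tau <= t2 /\ y = 1 + sqnorm (phi tau)) d ->
     ex_int_outer phi t1 t2 ->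
     mx_le (alpha%:M) (int_outer phi t1 t2) ->
     alpha >= kO * d / (kappa * Gmax * rhoO * lamO * exp (- lamO * (t2 - t1))) ->
     let OmegaFE := kO / (kappa * Gmax) in
     let t3 := t2 - ln rhoO / lamO in
     forall t, t2 <= t <= t3 ->
       mx_le (OmegaFE%:M) (Omega t) /\
       @mx_lt N ((kappa * Gmax)^-1%:M) (OmegaFE%:M)) /\
  (* (4) *)
  (bounded_on_from t0 phi ->
   forall (t1 t2 alpha d : R),
     t0 <= t1 -> t1 < t2 ->
     is_lub (fun y => exists tau, t1 <= tau <= t2 /\ y = 1 + sqnorm (phi tau)) d ->
     ex_int_outer phi t1 t2 ->
     mx_le (alpha%:M) (int_outer phi t1 t2) ->
     alpha >= kO * d / (kappa * Gmax * rhoO * lamO * exp (- lamO * (t2 - t1))) ->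
     forall (T alpha' d' : R),
       0 < T ->
       is_lub (fun y => exists tau, t1 <= tau /\ y = 1 + sqnorm (phi tau)) d' ->
       (forall t, t1 <= t -> ex_int_outer phi t (t + T)) ->
       (forall t, t1 <= t -> mx_le (alpha'%:M) (int_outer phi t (t + T))) ->
       let t2' := t1 + T in
       let alpha0 := kO * d / (kappa * Gmax * rhoO * lamO * exp (- lamO * (t2 - t1))) in
       alpha' >= alpha0 * exp (- lamO * (t2 - t2')) * d' / d ->
       let OmegaFE := kO / (kappa * Gmax) in
       forall t, t2' <= t ->
         mx_le (OmegaFE%:M) (Omega t) /\
         @mx_lt N ((kappa * Gmax)^-1%:M) (OmegaFE%:M)).
Proof.
move=> Hkb Hgb _ /andP[Hr0b Hr1b] HkOb Hlb _ HO0 HO1 Hsol.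
move/RltP: (Hkb) => Hk; move/RltP: (Hgb) => Hg; move/RltP: (Hr0b) => Hr0.
move/RltP: (Hr1b) => Hr1; move/RltP: (HkOb) => HkO; move/RltP: (Hlb) => Hl.
have Ht0 : Omega t0 = Omega0 by case: Hsol.
have HD : forall x t, Rlt t0 t -> is_derive (fun s => quad x (Omega s)) t
   (- lamO * quad x (Omega t) + lamO * (dotv x (phi t) ^+ 2 / (1 + sqnorm (phi t)))).
  by move=> x t /RltP Ht; exact: quad_derive Hsol Ht.
have HL : forall x, filterlim (fun s => quad x (Omega s)) (at_right t0) (locally (quad x (Omega t0))).
  by move=> x; rewrite Ht0; exact: quad_lim Hsol.
have HDpos : forall s, 0 < 1 + sqnorm (phi s).
  by move=> s; have := sqnorm_ge0 (phi s); lra.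
have HQ0 : forall x s, 0 <= dotv x (phi s) ^+ 2 / (1 + sqnorm (phi s)).
  by move=> x s; apply: divr_ge0; [apply: sqr_ge0 | apply: ltW].
have HQ1 : forall x s, dotv x (phi s) ^+ 2 / (1 + sqnorm (phi s)) <= sqnorm x.
  move=> x s; rewrite ler_pdivrMr //.
  apply: (le_trans (cauchy_schwarz x (phi s))).
  have := sqnorm_ge0 x; have := sqnorm_ge0 (phi s); nra.
have P1 : forall x t, Rle t0 t -> Rle 0 (quad x (Omega t)).
  move=> x t Ht.
  apply: (mono_nonneg (fun s => quad x (Omega s))
     (fun s => dotv x (phi s) ^+ 2 / (1 + sqnorm (phi s))) lamO t0 t (HD x) (HL x)).
  - exact: Rlt_le.
  - by move=> s _; apply/RleP.
  - rewrite /= Ht0; apply/RleP; have := (proj1 (mx_le_quad _ _) HO0) x; by rewrite quad0.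
  - exact: Ht.
have P2 : forall x t, Rle t0 t -> Rle (quad x (Omega t)) (quad x 1%:M).
  move=> x t Ht.
  have [Hd2 Hl2] := ode_flip (fun s => quad x (Omega s))
     (fun s => dotv x (phi s) ^+ 2 / (1 + sqnorm (phi s))) lamO t0 (sqnorm x) (HD x) (HL x).
  have H := mono_nonneg (fun s => sqnorm x - quad x (Omega s))
     (fun s => sqnorm x - dotv x (phi s) ^+ 2 / (1 + sqnorm (phi s))) lamO t0 t Hd2 Hl2 (Rlt_le _ _ Hl).
  have HQ2 : forall s, Rle t0 s -> Rle 0 (sqnorm x - dotv x (phi s) ^+ 2 / (1 + sqnorm (phi s))).
    by move=> s _; apply/RleP; rewrite subr_ge0; exact: HQ1.
  have Hf0 : Rle 0 (sqnorm x - quad x (Omega t0)).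
    apply/RleP; rewrite Ht0 subr_ge0.
    by have := (proj1 (mx_le_quad _ _) HO1) x; rewrite quad_scalar mul1r.
  move/RleP: (H HQ2 Hf0 Ht); rewrite subr_ge0 quad_scalar mul1r => H'.
  exact/RleP.
have HK : 0 < kappa * Gmax by apply: mulr_gt0.
have HkO0 : Rlt 0 kO by apply: (Rlt_trans _ 1) => //; exact: Rlt_0_1.
have Hqpos : forall x s, Rle 0 (dotv x (phi s) ^+ 2) by move=> x s; apply/RleP; apply: sqr_ge0.
split.
  move=> t /RleP Ht; apply/mx_le_quad => x; rewrite quad0; apply/RleP; exact: P1.
split.
  move=> t /RleP Ht; apply/mx_le_quad => x; apply/RleP; exact: P2.
split.
  move=> _ t1 t2 al d Ht01b Ht12b Hlub Hex Hal Hge OmegaFE t3 t /andP[Ht2b Ht3b].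
  move/RleP: (Ht01b) => Ht01; move/RltP: (Ht12b) => Ht12; move/RleP: (Hge) => Hge'.
  move/RleP: (Ht2b) => Ht2; move/RleP: (Ht3b) => Ht3.
  split; last exact: mxlt_part.
  have Hd : Rlt 0 d.
    apply: (Rlt_le_trans _ (1 + sqnorm (phi t1))); first by apply/RltP.
    apply: (proj1 Hlub); exists t1; split => //; by rewrite lexx ltW.
  apply/mx_le_quad => x; rewrite quad_scalar; apply/RleP.
  apply: (final3 lamO t1 t2 t rhoO kO kappa Gmax al d (sqnorm x) (quad x (Omega t))) => //.
  - by apply/RleP; apply: sqnorm_ge0.
  - exact: Rle_ge.
  apply: (window (fun s => quad x (Omega s)) (fun s => dotv x (phi s) ^+ 2 / (1 + sqnorm (phi s)))
     (fun s => dotv x (phi s) ^+ 2) lamO t0 t1 t2 t d (quad x (int_outer phi t1 t2)) (al * sqnorm x)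
     (HD x) (HL x) Hl) => //.
  - by move=> s _; apply/RleP.
  - move=> s [Hs1 Hs2]; apply: pbound => //.
    + by apply/RltP.
    + apply: (proj1 Hlub); exists s; split => //; by apply/andP; split; apply/RleP.
  - exact: quad_int.
  - apply/RleP; have := (proj1 (mx_le_quad _ _) Hal) x; by rewrite quad_scalar.
  - exact: P1.
move=> _ t1 t2 al d Ht01b Ht12b Hlub Hex Hal Hge T al' d' HTb Hlub' Hex' Hal' t2' alpha0 Hge2
  OmegaFE t Htb.
move/RleP: (Ht01b) => Ht01; move/RltP: (HTb) => HT; move/RleP: (Hge2) => Hge2'.
split; last exact: mxlt_part.
have Hd : Rlt 0 d.
  apply: (Rlt_le_trans _ (1 + sqnorm (phi t1))); first by apply/RltP.
  apply: (proj1 Hlub); exists t1; split => //; by rewrite lexx ltW.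
have Hd' : Rlt 0 d'.
  apply: (Rlt_le_trans _ (1 + sqnorm (phi t1))); first by apply/RltP.
  apply: (proj1 Hlub'); exists t1; split => //; by rewrite lexx.
have Habb : t1 <= t - T by move: Htb; rewrite /t2'; lra.
have E : t - T + T = t by ring.
have Hex2 : ex_int_outer phi (t - T) t.
  by have := Hex' _ Habb; rewrite RplusE E.
have Hal2 : mx_le (al'%:M) (int_outer phi (t - T) t).
  by have := Hal' _ Habb; rewrite RplusE E.
move/RleP: (Habb) => Hab.
apply/mx_le_quad => x; rewrite quad_scalar; apply/RleP.
apply: (final4 lamO t1 t2 T t rhoO kO kappa Gmax al' d d' (sqnorm x) (quad x (Omega t))) => //.
- by apply/RleP; apply: sqnorm_ge0.
- exact: Rle_ge.
apply: (window (fun s => quad x (Omega s)) (fun s => dotv x (phi s) ^+ 2 / (1 + sqnorm (phi s)))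
   (fun s => dotv x (phi s) ^+ 2) lamO t0 (t - T) t t d' (quad x (int_outer phi (t - T) t)) (al' * sqnorm x)
   (HD x) (HL x) Hl) => //.
- by move=> s _; apply/RleP.
- exact: (Rle_trans _ _ _ Ht01 Hab).
- by apply/RltP; rewrite ltrBlDr ltrDl.
- exact: Rle_refl.
- move=> s [Hs1 Hs2]; apply: pbound => //.
  + by apply/RltP.
  + apply: (proj1 Hlub'); exists s; split => //; apply/RleP; exact: (Rle_trans _ _ _ Hab Hs1).
- exact: quad_int.
- apply/RleP; have := (proj1 (mx_le_quad _ _) Hal2) x; by rewrite quad_scalar.
- apply: P1; exact: (Rle_trans _ _ _ Ht01 Hab).
Qed.
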